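(* Let $X$ be a connected simplicial complex and $Z\subseteq X$ a connected essential subcomplex. If the homomorphism $\pi_1Z\to\pi_1X$ induced by inclusion is not injective, then $Z$ is contained in a thick subcomplex $Z'\subseteq X$ such that $Z'\setminus Z$ consists of finitely many simplices.
   Context: For a subcomplex $Y$ of dimension at most $2$, the degree of an edge is the number of triangles of $Y$ containing it. $Y$ is essential if every edge has degree at least $2$ in $Y$ and no connected component of $Y$ is a single vertex; an essential $Y$ is thick if some edge has degree at least $3$ in $Y$. *)

(* Defs.v *)
(* Abstract simplicial complexes on an arbitrary
   (possibly infinite) vertex type V : eqType; a simplex is a nonempty
   duplicate-free list of vertices, taken up to permutation. *)
From HB Require Import structures.
From mathcomp Require Import all_boot.
From Stdlib Require Import Relations.
Set Implicit Arguments. Unset Strict Implicit. Unset Printing Implicit Defensive.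

Record complex (V : eqType) := Complex {
  simp : seq V -> Prop;
  simp_ne : forall s, simp s -> s <> [::];
  simp_uniq : forall s, simp s -> uniq s;
  simp_perm : forall s t, simp s -> perm_eq s t -> simp t;
  simp_face : forall s t, simp s -> t <> [::] -> uniq t -> {subset t <= s} -> simp t
}.

Section Defs.
Variable V : eqType.
Implicit Types X Y Z : complex V.

Definition subcomplex Y X : Prop := forall s, simp Y s -> simp X s.

Definition spans (K : complex V) (s : seq V) : Prop := simp K (undup s).

Definition is_vertex (K : complex V) (v : V) : Prop := simp K [:: v].
Definition is_edge (K : complex V) (u v : V) : Prop := simp K [:: u; v].

Definition dim_le2 (K : complex V) : Prop := forall s, simp K s -> size s <= 3.

Definition deg_ge (K : complex V) (u v : V) (k : nat) : Prop :=
  exists ws : seq V, [/\ uniq ws, size ws = k & forall w, w \in ws -> simp K [:: u; v; w]].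

Fixpoint epath (K : complex V) (x : V) (p : seq V) : Prop :=
  match p with
  | [::] => is_vertex K x
  | y :: q => spans K [:: x; y] /\ epath K y q
  end.

Definition connected (K : complex V) : Prop :=
  (exists v, is_vertex K v) /\
  forall u v, is_vertex K u -> is_vertex K v ->
    exists p, epath K u p /\ last u p = v.

Definition essential (K : complex V) : Prop :=
  [/\ dim_le2 K,
      (forall u v, is_edge K u v -> deg_ge K u v 2) &
      (* no connected component is a single vertex: every vertex lies on an edge *)
      (forall v, is_vertex K v -> exists w, is_edge K v w)].

Definition thick (K : complex V) : Prop :=
  essential K /\ exists u v, is_edge K u v /\ deg_ge K u v 3.

(* elementary moves of the edge-path group (Spanier): delete a repeated
   vertex, or replace u v w by u w when {u,v,w} spans a simplex *)
Definition emove (K : complex V) (p q : seq V) : Prop :=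
  (exists a b u, p = a ++ u :: u :: b /\ q = a ++ u :: b) \/
  (exists a b u v w, p = a ++ u :: v :: w :: b /\ q = a ++ u :: w :: b /\
                     spans K [:: u; v; w]).

Definition epath_equiv (K : complex V) : relation (seq V) :=
  clos_refl_sym_trans (seq V) (emove K).

Definition eloop (K : complex V) (x : V) (p : seq V) : Prop :=
  epath K x p /\ last x p = x.

(* the homomorphism pi_1(Z,x) -> pi_1(X,x) induced by inclusion (edge-path
   groups) is not injective for some basepoint x of Z *)
Definition pi1_not_injective (Z X : complex V) : Prop :=
  exists x p q, [/\ eloop Z x p, eloop Z x q,
                    epath_equiv X (x :: p) (x :: q) &
                    ~ epath_equiv Z (x :: p) (x :: q)].

Definition finitely_many_new (Y' Y : complex V) : Prop :=
  exists ss : seq (seq V), forall s, simp Y' s -> ~ simp Y s ->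
    exists2 t, t \in ss & perm_eq s t.

End Defs.

(* Main.v *)
Require Import Defs.
From mathcomp Require Import all_boot.
From Stdlib Require Import Relations Classical ClassicalEpsilon.
Set Implicit Arguments. Unset Strict Implicit. Unset Printing Implicit Defensive.

Definition pb (P : Prop) : bool := if excluded_middle_informative P then true else false.
Lemma pbP (P : Prop) : reflect P (pb P).
Proof. rewrite /pb; case: excluded_middle_informative => H; by constructor. Qed.

Section Basics.
Variable V : eqType.
Implicit Types K : complex V.

Lemma ee_refl K p : epath_equiv K p p. Proof. exact: rst_refl. Qed.
Lemma ee_sym K p q : epath_equiv K p q -> epath_equiv K q p. Proof. exact: rst_sym. Qed.
Lemma ee_trans K p q r : epath_equiv K p q -> epath_equiv K q r -> epath_equiv K p r.
Proof. exact: rst_trans. Qed.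
Lemma ee_step K p q : emove K p q -> epath_equiv K p q. Proof. exact: rst_step. Qed.

Lemma emove_ctx K l r p q : emove K p q -> emove K (l ++ p ++ r) (l ++ q ++ r).
Proof.
case=> [[a [b [u [-> ->]]]] | [a [b [u [v [w [-> [-> H]]]]]]]].
- left; exists (l ++ a), (b ++ r), u. by rewrite -!catA.
- right; exists (l ++ a), (b ++ r), u, v, w. by rewrite -!catA.
Qed.

Lemma equiv_ctx K l r p q : epath_equiv K p q -> epath_equiv K (l ++ p ++ r) (l ++ q ++ r).
Proof.
elim=> {p q} [p q H| p | p q _ IH | p q s _ IH1 _ IH2].
- exact/ee_step/emove_ctx.
- exact: ee_refl.
- exact: ee_sym.
- exact: ee_trans IH1 IH2.
Qed.

Lemma equiv_cons K x p q : epath_equiv K p q -> epath_equiv K (x :: p) (x :: q).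
Proof. move/(equiv_ctx [:: x] [::]). by rewrite !cats0. Qed.

Lemma equiv_catl K l p q : epath_equiv K p q -> epath_equiv K (l ++ p) (l ++ q).
Proof. move/(equiv_ctx l [::]). by rewrite !cats0. Qed.

Lemma equiv_catr K r p q : epath_equiv K p q -> epath_equiv K (p ++ r) (q ++ r).
Proof. exact: (equiv_ctx [::] r). Qed.

Lemma emove_mono K K' p q : subcomplex K K' -> emove K p q -> emove K' p q.
Proof.
move=> sub [H|[a [b [u [v [w [H1 [H2 H3]]]]]]]]; [by left|right].
exists a, b, u, v, w; split=> //; split=> //; exact: sub.
Qed.

Lemma equiv_mono K K' p q : subcomplex K K' -> epath_equiv K p q -> epath_equiv K' p q.
Proof.
move=> sub; elim=> {p q} [p q H| p | p q _ IH | p q s _ IH1 _ IH2].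
- exact/ee_step/(emove_mono sub).
- exact: ee_refl.
- exact: ee_sym.
- exact: ee_trans IH1 IH2.
Qed.

Lemma dupE K l x r : epath_equiv K (l ++ x :: x :: r) (l ++ x :: r).
Proof. by apply: ee_step; left; exists l, r, x. Qed.

Lemma dup0 K x r : epath_equiv K (x :: x :: r) (x :: r).
Proof. exact: (dupE K [::]). Qed.

Lemma triE K l u v w r : spans K [:: u; v; w] ->
  epath_equiv K (l ++ u :: v :: w :: r) (l ++ u :: w :: r).
Proof. by move=> H; apply: ee_step; right; exists l, r, u, v, w. Qed.

Lemma spans_sub K s t : spans K s -> t <> [::] -> {subset t <= s} -> spans K t.
Proof.
rewrite /spans => H tn st; apply: (simp_face H).
- by case: t tn st => //= a t _ _; case: ifP => // Ha; case: (undup t) (mem_undup t a) => //; rewrite Ha.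
- exact: undup_uniq.
- by move=> z; rewrite !mem_undup; apply: st.
Qed.

Lemma spansC K x y : spans K [:: x; y] -> spans K [:: y; x].
Proof. move=> H; apply: (spans_sub H) => // z; rewrite !inE; by case/orP=> ->; rewrite ?orbT. Qed.

Lemma spans_back K x y : spans K [:: x; y] -> spans K [:: x; y; x].
Proof.
move=> H; rewrite /spans /= !inE eqxx orbT.
move: H; rewrite /spans /= !inE.
case: (eqVneq x y) => [<-|nxy] //.

move=> H; apply: (simp_perm H); by rewrite -(perm_rot 1).
Qed.

Lemma back0 K x y r : spans K [:: x; y] -> epath_equiv K (x :: y :: x :: r) (x :: r).
Proof.
move=> H; apply: ee_trans (dup0 _ _ _).
exact: (triE [::] r (spans_back H)).
Qed.

Definition eK K : rel V := fun x y => pb (spans K [:: x; y]).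
Lemma eK_sym K x y : eK K x y = eK K y x.
Proof. rewrite /eK; by apply/pbP/pbP => /spansC. Qed.

Lemma epath_path K x p : epath K x p -> path (eK K) x p.
Proof. elim: p x => //= y p IH x [H1 H2]; rewrite IH // andbT; exact/pbP. Qed.

Lemma rev_path_sym K x p : path (eK K) x p -> path (eK K) (last x p) (rev (belast x p)).
Proof.
have E : (fun z => (eK K)^~ z) =2 eK K by move=> a b; exact: eK_sym.
by rewrite rev_path (eq_path E).
Qed.

Lemma rev_cons_last (x : V) p : rev (x :: p) = last x p :: rev (belast x p).
Proof. by rewrite lastI rev_rcons. Qed.

Lemma cancel1 K x p : path (eK K) x p ->
  epath_equiv K (x :: p ++ rev (belast x p)) [:: x].
Proof.
elim: p x => [|y p IH] x /=; first by move=> _; exact: ee_refl.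
case/andP=> /pbP Hxy Hp.
rewrite rev_cons -cats1.
have := equiv_ctx [:: x] [:: x] (IH y Hp).
rewrite /= => H; apply: (ee_trans _ (back0 [::] Hxy)).
by move: H; rewrite -catA.
Qed.

Lemma cancel2 K x p : path (eK K) x p ->
  epath_equiv K ((x :: p) ++ behead (rev (x :: p))) [:: x].
Proof. by move=> H; rewrite rev_cons_last /=; exact: cancel1. Qed.

End Basics.

Section Proj.
Variable V : eqType.
Variables (K K' : complex V) (iota : V -> V) (h : V -> V -> seq V).

Fixpoint Phi (s : seq V) : seq V :=
  match s with
  | [::] => [::]
  | x :: s' => match s' with [::] => [:: iota x] | y :: _ => h x y ++ Phi s' end
  end.

Fixpoint Op (s : seq V) (x : V) : seq V :=
  match s with [::] => [::] | y :: s' => h y (head x s') ++ Op s' x end.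

Lemma Phi_cat s x t : Phi (s ++ x :: t) = Op s x ++ Phi (x :: t).
Proof.
elim: s => [|y s IH] //.
case: s IH => [|z s] IH; first by rewrite /= cats0.
change (h y z ++ Phi ((z :: s) ++ x :: t) = (h y z ++ Op (z :: s) x) ++ Phi (x :: t)).
by rewrite IH catA.
Qed.

Hypothesis hh : forall x y, h x y = iota x :: behead (h x y).

Lemma Phi_cons x t : Phi (x :: t) = iota x :: behead (Phi (x :: t)).
Proof. case: t => [|y t] //=. by rewrite hh. Qed.

Hypothesis L1 : forall u, epath_equiv K' (h u u ++ [:: iota u]) [:: iota u].
Hypothesis L2 : forall u v w, u != v -> v != w -> spans K [:: u; v; w] ->
  epath_equiv K' (h u v ++ h v w ++ [:: iota w]) (h u w ++ [:: iota w]).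

Lemma L1c l u r : epath_equiv K' (l ++ h u u ++ iota u :: r) (l ++ iota u :: r).
Proof.
have := equiv_ctx l r (L1 u). by rewrite -!catA /=.
Qed.

Lemma L2c l u v w r : spans K [:: u; v; w] ->
  epath_equiv K' (l ++ h u v ++ h v w ++ iota w :: r) (l ++ h u w ++ iota w :: r).
Proof.
move=> S.
case: (eqVneq u v) => [<-|nuv].
  rewrite (hh u w) -/(cat [:: iota u] _) catA. 
  have := L1c l u (behead (h u w) ++ iota w :: r). by rewrite -!catA /=.
case: (eqVneq v w) => [<-|nvw].
  have := L1c (l ++ h u v) v r. by rewrite -!catA.
have := equiv_ctx l r (L2 nuv nvw S). by rewrite -!catA /=.
Qed.

Lemma Phi_equiv p q : epath_equiv K p q -> epath_equiv K' (Phi p) (Phi q).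
Proof.
elim=> {p q} [p q H| p | p q _ IH | p q s _ IH1 _ IH2].
- case: H => [[a [b [u [-> ->]]]] | [a [b [u [v [w [-> [-> H]]]]]]]].
  + rewrite !Phi_cat.
    change (epath_equiv K' (Op a u ++ h u u ++ Phi (u :: b)) (Op a u ++ Phi (u :: b))).
    rewrite (Phi_cons u b). exact: L1c.
  + rewrite !Phi_cat.
    change (epath_equiv K' (Op a u ++ h u v ++ h v w ++ Phi (w :: b)) (Op a u ++ h u w ++ Phi (w :: b))).
    rewrite (Phi_cons w b). exact: L2c.
- exact: ee_refl.
- exact: ee_sym.
- exact: ee_trans IH1 IH2.
Qed.

End Proj.

Section ProjId.
Variable V : eqType.
Variables (Z : complex V) (iota : V -> V) (h : V -> V -> seq V).
Hypothesis H1 : forall x y, spans Z [:: x; y] -> h x y = [:: x].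
Hypothesis H2 : forall x, is_vertex Z x -> iota x = x.

Lemma Phi_id x p : epath Z x p -> Phi iota h (x :: p) = x :: p.
Proof.
elim: p x => [|y p IH] x; first by move/H2 => /= ->.
case=> S E. change (h x y ++ Phi iota h (y :: p) = x :: y :: p).
by rewrite H1 // IH.
Qed.
End ProjId.

Section Restr.
Variable V : eqType.
Variables (K : complex V) (a b : V).
Definition rsimp (s : seq V) : Prop := simp K s /\ ~ (a \in s /\ b \in s).
Lemma rs_ne s : rsimp s -> s <> [::]. Proof. by case=> /simp_ne. Qed.
Lemma rs_uniq s : rsimp s -> uniq s. Proof. by case=> /simp_uniq. Qed.
Lemma rs_perm s t : rsimp s -> perm_eq s t -> rsimp t.
Proof.
case=> H1 H2 P; split; first exact: simp_perm P.
by rewrite -!(perm_mem P).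
Qed.
Lemma rs_face s t : rsimp s -> t <> [::] -> uniq t -> {subset t <= s} -> rsimp t.
Proof.
case=> H1 H2 tn ut st; split; first exact: simp_face H1 tn ut st.
by case=> /st ? /st ?; apply: H2.
Qed.
Definition restr : complex V := Complex rs_ne rs_uniq rs_perm rs_face.
End Restr.

Definition hyp4 (V : eqType) (K : complex V) (x y z : V) :=
  [/\ spans K [:: x; z], spans K [:: z; x], spans K [:: y; z] & spans K [:: z; y]].
Lemma cc1 (V : eqType) (K : complex V) x y z : hyp4 K x y z ->
  epath_equiv K [:: x; z; y; z; x] [:: x; x].
Proof.
case=> H1 H2 H3 H4.
apply: (ee_trans (equiv_cons _ (back0 [:: x] H4))).
apply: (ee_trans (back0 [::] H1)). apply: ee_sym; exact: dup0.
Qed.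
Lemma cc3 (V : eqType) (K : complex V) x y z : hyp4 K x y z ->
  epath_equiv K [:: x; z; y; z] [:: x; z].
Proof. case=> H1 H2 H3 H4. exact: (equiv_cons _ (back0 [::] H4)). Qed.
Lemma cc6 (V : eqType) (K : complex V) x y z : hyp4 K x y z ->
  epath_equiv K [:: z; x; z; y] [:: z; y].
Proof. case=> H1 H2 H3 H4. exact: (back0 [:: y] H2). Qed.
Lemma cc2 (V : eqType) (K : complex V) (x y z : V) : epath_equiv K [:: x; z; y; y] [:: x; z; y].
Proof. exact: (dupE K [:: x; z] y [::]). Qed.
Lemma cc4 (V : eqType) (K : complex V) (x y z : V) : epath_equiv K [:: x; x; z; y] [:: x; z; y].
Proof. exact: dup0. Qed.


Section Collapse.
Variable V : eqType.
Variables (Z Y : complex V) (a b c : V).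
Hypotheses (sZY : subcomplex Z Y) (Habc : simp Y [:: a; b; c])
  (nZab : ~ simp Z [:: a; b])
  (D1 : forall s, simp Y s -> a \in s -> b \in s -> {subset s <= [:: a; b; c]}).

Let Y' := restr Y a b.

Let uabc : uniq [:: a; b; c]. Proof. exact: simp_uniq Habc. Qed.
Let nab : (a == b) = false.
Proof. by move: uabc; rewrite /= !inE; case: (a == b). Qed.
Let nba : (b == a) = false. Proof. by rewrite eq_sym nab. Qed.
Let nac : (a == c) = false.
Proof. by move: uabc; rewrite /= !inE; case: (a == c); rewrite ?orbT. Qed.
Let nca : (c == a) = false. Proof. by rewrite eq_sym nac. Qed.
Let nbc : (b == c) = false.
Proof. by move: uabc; rewrite /= !inE; case: (b == c); rewrite ?orbT ?andbF. Qed.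
Let ncb : (c == b) = false. Proof. by rewrite eq_sym nbc. Qed.

Let edgeY' u v : u \in [:: a; b; c] -> v \in [:: a; b; c] -> u != v ->
   ~ (a \in [:: u; v] /\ b \in [:: u; v]) -> spans Y' [:: u; v].
Proof.
move=> Hu Hv nuv nab'.
rewrite /spans /= inE (negPf nuv) /=; split=> //.
apply: (simp_face Habc) => //=; first by rewrite inE nuv.
move=> w; rewrite inE => /orP[/eqP->|]; first exact: Hu.
by rewrite inE => /eqP->.
Qed.

Let Hac : spans Y' [:: a; c].
Proof. by apply: edgeY'; rewrite ?inE ?eqxx ?orbT ?nac ?nca ?nab ?nba ?ncb ?nbc //= => -[]. Qed.
Let Hca : spans Y' [:: c; a].
Proof. by apply: edgeY'; rewrite ?inE ?eqxx ?orbT ?nac ?nca ?nab ?nba ?ncb ?nbc //= => -[]. Qed.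
Let Hbc : spans Y' [:: b; c].
Proof. by apply: edgeY'; rewrite ?inE ?eqxx ?orbT ?nac ?nca ?nab ?nba ?ncb ?nbc //= => -[]. Qed.
Let Hcb : spans Y' [:: c; b].
Proof. by apply: edgeY'; rewrite ?inE ?eqxx ?orbT ?nac ?nca ?nab ?nba ?ncb ?nbc //= => -[]. Qed.


Let Hab4 : hyp4 Y' a b c. Proof. by split. Qed.
Let Hba4 : hyp4 Y' b a c. Proof. by split. Qed.

Definition hc x y := if (x == a) && (y == b) then [:: a; c]
  else if (x == b) && (y == a) then [:: b; c] else [:: x].

Lemma hc_hh x y : hc x y = (fun z => z) x :: behead (hc x y).
Proof. rewrite /hc; by do 2 case: ifP => [/andP[/eqP-> _]|_] //. Qed.

Lemma hc_single x y : ~~((x == a) && (y == b)) -> ~~((x == b) && (y == a)) -> hc x y = [:: x].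
Proof. by rewrite /hc => /negPf-> /negPf->. Qed.

Lemma hc_L1 u : epath_equiv Y' (hc u u ++ [:: (fun z => z) u]) [:: (fun z => z) u].
Proof.
rewrite hc_single /=; first exact: dup0.
- by apply/negP => /andP[/eqP-> /eqP]; apply/eqP; rewrite nab.
- by apply/negP => /andP[/eqP-> /eqP]; apply/eqP; rewrite nba.
Qed.

Lemma hc_L2 u v w : u != v -> v != w -> spans Y [:: u; v; w] ->
  epath_equiv Y' (hc u v ++ hc v w ++ [:: (fun z => z) w]) (hc u w ++ [:: (fun z => z) w]).
Proof.
move=> nuv nvw S.
case: (boolP ((a \in [:: u; v; w]) && (b \in [:: u; v; w]))) => Hin; last first.
  rewrite (@hc_single u v) ?(@hc_single v w) ?(@hc_single u w) /=;
    try (apply/negP => /andP[/eqP ? /eqP ?]; subst; move: Hin; by rewrite !inE !eqxx ?orbT).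
  apply: (triE [::] [::]); split; first exact: S.
  rewrite !mem_undup => -[Ha Hb]; move: Hin; by rewrite Ha Hb.
have Hs : {subset [:: u; v; w] <= [:: a; b; c]}.
  move=> z zin; apply: (D1 S) ; rewrite ?mem_undup //; by case/andP: Hin.
have Hu : u \in [:: a; b; c] by apply: Hs; rewrite inE eqxx.
have Hv : v \in [:: a; b; c] by apply: Hs; rewrite !inE eqxx ?orbT.
have Hw : w \in [:: a; b; c] by apply: Hs; rewrite !inE eqxx ?orbT.
move: Hu Hv Hw Hin nuv nvw S; rewrite !inE => /or3P[]/eqP-> /or3P[]/eqP-> /or3P[]/eqP->;
  rewrite /hc ?eqxx ?nab ?nba ?nac ?nca ?nbc ?ncb //= => _ _ _ _;
  first [ exact: ee_refl
        | exact: (cc1 Hab4) | exact: (cc1 Hba4)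
        | exact: (cc2 Y' a b c) | exact: (cc2 Y' b a c)
        | exact: (cc3 Hab4) | exact: (cc3 Hba4)
        | exact: (cc4 Y' a b c) | exact: (cc4 Y' b a c)
        | exact: (cc6 Hab4) | exact: (cc6 Hba4) ].
Qed.

Lemma collapse_equiv x p q : epath Z x p -> epath Z x q ->
  epath_equiv Y (x :: p) (x :: q) -> epath_equiv Y' (x :: p) (x :: q).
Proof.
move=> Pp Pq E.
have := Phi_equiv hc_hh hc_L1 hc_L2 E.
have H1 : forall x y, spans Z [:: x; y] -> hc x y = [:: x].
  move=> x' y' S; apply: hc_single; apply/negP => /andP[/eqP ? /eqP ?]; subst.
  - by apply: nZab; move: S; rewrite /spans /= !inE nab.
  - by apply: nZab; move/spansC: S; rewrite /spans /= !inE nab.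
have H2 : forall x, is_vertex Z x -> (fun z => z) x = x by [].
by rewrite !(Phi_id H1 H2).
Qed.
End Collapse.

Lemma spans_vertex (V : eqType) (K : complex V) x y : spans K [:: x; y] -> is_vertex K x.
Proof. move/spans_sub => /(_ [:: x]); rewrite /spans /= => H; apply: H => // z; rewrite !inE => /eqP ->; by rewrite eqxx. Qed.

Lemma spans_vertex2 (V : eqType) (K : complex V) x : spans K [:: x; x] -> is_vertex K x.
Proof. by rewrite /spans /= inE eqxx. Qed.

Section Wedge.
Variable V : eqType.
Variables (Z Y : complex V) (z0 : V) (rho : V -> seq V).
Hypothesis Hrp : forall v, path (eK Z) z0 (rho v).
Hypothesis Hrl : forall v, is_vertex Z v -> last z0 (rho v) = v.
Hypothesis KP : forall u v w, simp Y [:: u; v; w] -> simp Z [:: u; v] -> simp Z [:: u; v; w].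

Definition io v := last z0 (rho v).
Definition hw x y := if pb (spans Z [:: x; y]) then [:: x]
  else rev (z0 :: rho x) ++ belast z0 (rho y).

Lemma hw_hh x y : hw x y = io x :: behead (hw x y).
Proof.
rewrite /hw; case: pbP => [S|_]; first by rewrite /io Hrl //; exact: spans_vertex S.
by rewrite rev_cons_last.
Qed.

Lemma Tau u : epath_equiv Z (rev (z0 :: rho u) ++ belast z0 (rho u) ++ [:: io u]) [:: io u].
Proof.
rewrite cats1 /io -lastI rev_cons -cats1 -catA /=.
apply: ee_trans (dupE _ _ _ _) _.
have := cancel2 (rev_path_sym (Hrp u)).
by rewrite -rev_cons_last revK /= rev_cons -cats1 -catA.
Qed.

Lemma Mid u v r : epath_equiv Z (rev (z0 :: rho u) ++ belast z0 (rho v) ++ rev (z0 :: rho v) ++ r)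
                               (rev (z0 :: rho u) ++ r).
Proof.
rewrite (rev_cons_last z0 (rho v)) -cat_rcons -lastI.
have := equiv_ctx (rev (z0 :: rho u)) r (cancel1 (Hrp v)).
move=> H; move: H; rewrite /= -!catA /= => H; apply: (ee_trans H).
rewrite rev_cons -cats1 -!catA /=. exact: (dupE _ (rev (rho u))).
Qed.

Lemma hw_L1 u : epath_equiv Z (hw u u ++ [:: io u]) [:: io u].
Proof.
rewrite /hw; case: pbP => [S|_]; last by rewrite -catA; exact: Tau.
rewrite /io Hrl /=; [exact: dup0 | exact: spans_vertex2].
Qed.

Lemma hw_L2 u v w : u != v -> v != w -> spans Y [:: u; v; w] ->
  epath_equiv Z (hw u v ++ hw v w ++ [:: io w]) (hw u w ++ [:: io w]).
Proof.
move=> nuv nvw S.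
case: (pbP (spans Z [:: u; v; w])) => SZ.
  have E : forall x y, x \in [:: u; v; w] -> y \in [:: u; v; w] -> hw x y = [:: x].
    move=> x y xi yi; rewrite /hw; case: pbP => // N; exfalso; apply: N.
    apply: (spans_sub SZ) => // t; rewrite inE => /orP[/eqP->|]; first exact: xi.
    by rewrite inE => /eqP->.
  have Vw : is_vertex Z w.
    change (spans Z [:: w]); apply: (spans_sub SZ) => // t; rewrite inE => /eqP->.
    by rewrite !inE eqxx ?orbT.
  rewrite (E u v) ?(E v w) ?(E u w) ?inE ?eqxx ?orbT // /io Hrl //=.
  exact: (triE [::] [::] SZ).
have [Nuv Nvw] : ~ spans Z [:: u; v] /\ ~ spans Z [:: v; w].
  case: (eqVneq u w) => [Euw|nuw].
    subst w; split=> [H|/spansC H]; apply: SZ; exact: spans_back.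
  have U : uniq [:: u; v; w] by rewrite /= !inE negb_or nuv nuw nvw.
  move: S SZ; rewrite /spans !(undup_id U) => S SZ.
  have Uuv : uniq [:: u; v] by rewrite /= inE nuv.
  have Uvw : uniq [:: v; w] by rewrite /= inE nvw.
  rewrite !undup_id //; split=> H; apply: SZ.
  - exact: KP.
  - have S' : simp Y [:: v; w; u] by apply: (simp_perm S); rewrite -(perm_rot 1).
    apply: (simp_perm (KP S' H)). by rewrite -(perm_rot 2).
rewrite /hw; case: pbP => // _; case: pbP => // _.
apply: ee_trans; first by rewrite -!catA; exact: Mid.
case: (eqVneq u w) => [<-|nuw]; last first.
  case: pbP => [H|_]; last by rewrite -!catA; exact: ee_refl.
  exfalso; apply: SZ.
  have U : uniq [:: u; v; w] by rewrite /= !inE negb_or nuv nuw nvw.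
  move: S H; rewrite /spans !undup_id //; last by rewrite /= inE nuw.
  move=> S H.
  have S' : simp Y [:: u; w; v] by apply: (simp_perm S); rewrite perm_cons -(perm_rot 1).
  apply: (simp_perm (KP S' H)). by rewrite perm_cons -(perm_rot 1).
apply: ee_trans; first exact: Tau.
apply: ee_sym; exact: hw_L1.
Qed.

Lemma wedge_equiv x p q : epath Z x p -> epath Z x q ->
  epath_equiv Y (x :: p) (x :: q) -> epath_equiv Z (x :: p) (x :: q).
Proof.
move=> Pp Pq E.
have := Phi_equiv hw_hh hw_L1 hw_L2 E.
have H1 : forall x y, spans Z [:: x; y] -> hw x y = [:: x].
  by move=> x' y' S; rewrite /hw; case: pbP.
by rewrite !(Phi_id H1 Hrl).
Qed.
End Wedge.

Section Core.
Variable V : eqType.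
Variables (Y Z : complex V).
Definition csimp (s : seq V) : Prop :=
  simp Y s /\ (simp Z s \/ exists u v w, simp Y [:: u; v; w] /\ {subset s <= [:: u; v; w]}).
Lemma cs_ne s : csimp s -> s <> [::]. Proof. by case=> /simp_ne. Qed.
Lemma cs_uniq s : csimp s -> uniq s. Proof. by case=> /simp_uniq. Qed.
Lemma cs_perm s t : csimp s -> perm_eq s t -> csimp t.
Proof.
case=> H1 H2 P; split; first exact: simp_perm P.
case: H2 => [H|[u [v [w [H3 H4]]]]]; first by left; exact: simp_perm P.
by right; exists u, v, w; split=> // z; rewrite -(perm_mem P); exact: H4.
Qed.
Lemma cs_face s t : csimp s -> t <> [::] -> uniq t -> {subset t <= s} -> csimp t.
Proof.
case=> H1 H2 tn ut st; split; first exact: simp_face H1 tn ut st.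
case: H2 => [H|[u [v [w [H3 H4]]]]]; first by left; exact: simp_face H tn ut st.
by right; exists u, v, w; split=> // z /st; exact: H4.
Qed.
Definition core : complex V := Complex cs_ne cs_uniq cs_perm cs_face.
End Core.

Section Clos.
Variable V : eqType.
Variables (Z : complex V) (F : seq (seq V)).
Definition ysimp (s : seq V) : Prop :=
  simp Z s \/ [/\ s <> [::], uniq s & exists2 f, f \in F & {subset s <= f}].
Lemma ys_ne s : ysimp s -> s <> [::]. Proof. by case=> [/simp_ne|[]]. Qed.
Lemma ys_uniq s : ysimp s -> uniq s. Proof. by case=> [/simp_uniq|[]]. Qed.
Lemma ys_perm s t : ysimp s -> perm_eq s t -> ysimp t.
Proof.
move=> H P; case: H => [H|[H1 H2 [f fF sf]]]; first by left; exact: simp_perm P.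
right; split.
- by move=> E; apply: H1; move: P; rewrite E => /perm_nilP.
- by rewrite -(perm_uniq P).
- by exists f => // z; rewrite -(perm_mem P); exact: sf.
Qed.
Lemma ys_face s t : ysimp s -> t <> [::] -> uniq t -> {subset t <= s} -> ysimp t.
Proof.
move=> H tn ut st; case: H => [H|[H1 H2 [f fF sf]]]; first by left; exact: simp_face H tn ut st.
by right; split=> //; exists f => // z /st; exact: sf.
Qed.
Definition clos : complex V := Complex ys_ne ys_uniq ys_perm ys_face.
End Clos.

Lemma deg_mono (V : eqType) (K K' : complex V) x y k :
  subcomplex K K' -> deg_ge K x y k -> deg_ge K' x y k.
Proof. move=> sub [ws [U S H]]; exists ws; split=> // w /H; exact: sub. Qed.

Lemma third (V : eqType) (u v w x y : V) : uniq [:: u; v; w] -> x \in [:: u; v; w] ->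
  y \in [:: u; v; w] -> x != y -> exists c, [&& c \in [:: u; v; w], c != x & c != y].
Proof.
rewrite /= !inE !negb_or => /andP[/andP[Uuv Uuw] /andP[Uvw _]].
have Uvu : v != u by rewrite eq_sym. have Uwu : w != u by rewrite eq_sym.
have Uwv : w != v by rewrite eq_sym.
move=> /or3P[]/eqP-> /or3P[]/eqP->; rewrite ?eqxx // => _;
 first [ by exists u; rewrite !inE ?eqxx ?orbT /= ?Uuv ?Uuw ?Uvw ?Uvu ?Uwu ?Uwv
       | by exists v; rewrite !inE ?eqxx ?orbT /= ?Uuv ?Uuw ?Uvw ?Uvu ?Uwu ?Uwv
       | by exists w; rewrite !inE ?eqxx ?orbT /= ?Uuv ?Uuw ?Uvw ?Uvu ?Uwu ?Uwv ].
Qed.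

Definition rhoF (V : eqType) (Z : complex V) z0 (v : V) : seq V :=
  match excluded_middle_informative (exists p, epath Z z0 p /\ last z0 p = v) with
  | left H => proj1_sig (constructive_indefinite_description _ H) | right _ => [::] end.

Lemma rho_exists (V : eqType) (Z : complex V) z0 :
  (forall v, is_vertex Z v -> exists p, epath Z z0 p /\ last z0 p = v) ->
  exists rho : V -> seq V, (forall v, path (eK Z) z0 (rho v)) /\
                           (forall v, is_vertex Z v -> last z0 (rho v) = v).
Proof.
move=> Hc; exists (rhoF Z z0); split=> v; rewrite /rhoF.
- destruct (excluded_middle_informative (exists p, epath Z z0 p /\ last z0 p = v)) as [H|N]; last by [].
  destruct (constructive_indefinite_description _ H) as [p Pp]; case: Pp => P _ /=; exact: epath_path P.
- move=> Hv; destruct (excluded_middle_informative (exists p, epath Z z0 p /\ last z0 p = v)) as [H|N].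
    by destruct (constructive_indefinite_description _ H) as [p Pp]; case: Pp.
  by exfalso; apply: N; exact: Hc.
Qed.

Lemma sub3 (T : eqType) (x y z : T) (t : seq T) : x \in t -> y \in t -> z \in t -> {subset [:: x; y; z] <= t}.
Proof. move=> ? ? ? w; rewrite !inE => /or3P[]/eqP-> //. Qed.
Lemma sub2 (T : eqType) (x y : T) (t : seq T) : x \in t -> y \in t -> {subset [:: x; y] <= t}.
Proof. move=> ? ? w; rewrite !inE => /orP[]/eqP-> //. Qed.

Section Main.
Variable V : eqType.
Variables X Z : complex V.
Hypotheses (cZ : connected Z) (eZ : essential Z).

Lemma main_ind n : forall (Y : complex V) (ss : seq (seq V)),
  subcomplex Y X -> subcomplex Z Y -> dim_le2 Y -> size ss < n ->
  (forall s, simp Y s -> ~ simp Z s -> exists2 t, t \in ss & perm_eq s t) ->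
  forall x p q, eloop Z x p -> eloop Z x q ->
  epath_equiv Y (x :: p) (x :: q) -> ~ epath_equiv Z (x :: p) (x :: q) ->
  exists Z' : complex V,
    [/\ subcomplex Z' X, subcomplex Z Z', thick Z' & finitely_many_new Z' Z].
Proof.
elim: n => [|n IH] Y ss sYX sZY dY szss cov x p q [Pp Lp] [Pq Lq] E NE //.
case: (classic (exists a b c, [/\ simp Y [:: a; b; c], ~ simp Z [:: a; b] &
    forall s, simp Y s -> a \in s -> b \in s -> {subset s <= [:: a; b; c]}]))
  => [[a [b [c [Habc nZab D1]]]] | NB].
  have Uabc := simp_uniq Habc.
  have nab : a != b by move: Uabc; rewrite /= !inE negb_or => /andP[/andP[]].
  have Uab : uniq [:: a; b] by rewrite /= inE nab.
  have nZabc : ~ simp Z [:: a; b; c].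
    move=> H; apply: nZab; apply: (simp_face H) => // z.
    by rewrite !inE => /orP[]->; rewrite ?orbT.
  have [t tss Pt] := cov _ Habc nZabc.
  pose ss' := [seq t <- ss | ~~ perm_eq t [:: a; b; c]].
  apply: (IH (restr Y a b) ss' _ _ _ _ _ x p q (conj Pp Lp) (conj Pq Lq) _ NE).
  - by move=> s [Hs _]; exact: sYX.
  - move=> s Hs; split; first exact: sZY.
    case=> As Bs; apply: nZab; apply: (simp_face Hs) => // z.
    by rewrite !inE => /orP[]/eqP->.
  - by move=> s [Hs _]; exact: dY.
  - have H1 : count (fun t => ~~ perm_eq t [:: a; b; c]) ss < size ss.
      rewrite -(count_predC (fun t => ~~ perm_eq t [:: a; b; c]) ss).
      rewrite -{1}[count _ ss]addn0 ltn_add2l -has_count; apply/hasP; exists t => //=.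
      by rewrite negbK perm_sym.
    rewrite size_filter; rewrite ltnS in szss; exact: leq_trans H1 szss.
  - move=> s [Hs Nab] Ns; have [t' t'ss P'] := cov s Hs Ns.
    exists t' => //; rewrite mem_filter t'ss andbT; apply/negP => P2; apply: Nab.
    have P3 := perm_trans P' P2.
    by split; rewrite (perm_mem P3) !inE eqxx ?orbT.
  - move: (collapse_equiv Habc nZab D1 Pp Pq E). done.
case: (classic (exists u v w, [/\ simp Y [:: u; v; w], ~ simp Z [:: u; v; w] & simp Z [:: u; v]]))
  => [[u [v [w [Huvw nZ Zuv]]]] | NA]; last first.
  exfalso; apply: NE.
  case: cZ => [[z0 Vz0] Cz].
  have [rho [Hrp Hrl]] := rho_exists (fun v Hv => Cz z0 v Vz0 Hv).
  apply: (wedge_equiv Hrp Hrl _ Pp Pq E).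
  move=> a b c H1 H2; apply: NNPP => H3; apply: NA; exists a, b, c; by split.
have sZC : subcomplex Z (core Y Z) by move=> s Hs; split; [exact: sZY | by left].
case: eZ => _ Ed Vt.
exists (core Y Z); split.
- by move=> s [Hs _]; exact: sYX.
- exact: sZC.
- split; last first.
    exists u, v; split; first exact: sZC.
    have [ws [Uws Sws Hws]] := Ed _ _ Zuv.
    exists (w :: ws); split.
    + rewrite /= Uws andbT; apply/negP => /Hws; exact: nZ.
    + by rewrite /= Sws.
    + move=> z; rewrite inE => /orP[/eqP->|/Hws H]; last exact: sZC.
      split=> //; right; exists u, v, w; by split.
  split.
  + by move=> s [Hs _]; exact: dY.
  + move=> x' y' [Hxy Hor].
    have nxy : x' != y' by move: (simp_uniq Hxy); rewrite /= inE andbT.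
    case: (classic (simp Z [:: x'; y'])) => Zxy; first exact: deg_mono sZC (Ed _ _ Zxy).
    case: Hor => [//|[a [b [c [Habc Sub]]]]].
    have yin : y' \in [:: x'; y'] by rewrite !inE eqxx orbT.
    have [c' /and3P[c'in c'x c'y]] :=
      third (simp_uniq Habc) (Sub x' (mem_head _ _)) (Sub y' yin) nxy.
    have Yxyc : simp Y [:: x'; y'; c'].
      apply: (simp_face Habc) => //.
        by rewrite /= !inE negb_or nxy eq_sym c'x eq_sym c'y.
      apply: sub3 => //; apply: Sub; by rewrite !inE eqxx ?orbT.
    have [s [Ys xs ys ns]] : exists s, [/\ simp Y s, x' \in s, y' \in s & ~ {subset s <= [:: x'; y'; c']}].
      apply: NNPP => H; apply: NB; exists x', y', c'; split=> // s Ys xs ys.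
      apply: NNPP => N; apply: H; by exists s.
    have [d ds dn] : exists2 d, d \in s & d \notin [:: x'; y'; c'].
      apply: NNPP => H; apply: ns => z zs; apply: NNPP => zn; apply: H; exists z => //; exact/negP.
    have Yxyd : simp Y [:: x'; y'; d].
      move: dn; rewrite !inE !negb_or => /and3P[dx dy dc].
      apply: (simp_face Ys) => //.
        by rewrite /= !inE negb_or nxy eq_sym dx eq_sym dy.
      by apply: sub3.
    exists [:: c'; d]; split=> //.
    * move: dn; rewrite /= !inE !negb_or andbT => /and3P[_ _ dc]; by rewrite eq_sym.
    * move=> z; rewrite !inE => /orP[]/eqP->; split=> //; right.
      - by exists x', y', c'; split.
      - by exists x', y', d; split.
  + move=> x' [Hx Hor]; case: Hor => [Zx|[a [b [c [Habc Sub]]]]].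
      have [y' Ey] := Vt x' Zx; exists y'; exact: sZC.
    have xin : x' \in [:: a; b; c] by apply: Sub; rewrite inE eqxx.
    have Uabc := simp_uniq Habc.
    have nab : a != b by move: Uabc; rewrite /= !inE negb_or => /andP[/andP[]].
    exists (if x' == a then b else a).
    have Sub2 : {subset [:: x'; if x' == a then b else a] <= [:: a; b; c]}.
      apply: sub2 => //; case: ifP; by rewrite !inE eqxx ?orbT.
    have U2 : uniq [:: x'; if x' == a then b else a].
      rewrite /= inE andbT; case: ifP => [/eqP->|/negbT] //; by rewrite eq_sym.
    split; first by apply: (simp_face Habc).
    right; exists a, b, c; by split.
- by exists ss => s [Hs _] Ns; exact: cov.
Qed.
End Main.

Fixpoint allb n : seq bitseq :=
  if n is n'.+1 then [::] :: (map (cons true) (allb n') ++ map (cons false) (allb n'))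
  else [:: [::]].

Lemma allbP n m : size m <= n -> m \in allb n.
Proof.
elim: n m => [|n IH] [|b m] //= H; rewrite ?inE ?eqxx //.
apply/orP; right; rewrite mem_cat; case: b; [apply/orP; left | apply/orP; right];
  apply: map_f; exact: IH.
Qed.

Lemma init (V : eqType) (X Z : complex V) p q : epath_equiv X p q ->
  exists F : seq (seq V), (forall f, f \in F -> spans X f /\ size f = 3) /\
                          epath_equiv (clos Z F) p q.
Proof.
elim=> {p q} [p q H | p | p q _ [F [HF E]] | p q r _ [F1 [H1 E1]] _ [F2 [H2 E2]]].
- case: H => [[a [b [u [-> ->]]]] | [a [b [u [v [w [-> [-> S]]]]]]]].
  + by exists [::]; split=> //; exact: dupE.
  + exists [:: [:: u; v; w]]; split; first by move=> f; rewrite inE => /eqP->.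
    apply: triE; rewrite /spans; right; split.
    * exact: (simp_ne S).
    * exact: undup_uniq.
    * by exists [:: u; v; w]; rewrite ?inE // => z; rewrite mem_undup.
- by exists [::]; split=> //; exact: ee_refl.
- by exists F; split=> //; exact: ee_sym.
- exists (F1 ++ F2); split.
    by move=> f; rewrite mem_cat => /orP[/H1|/H2].
  have M1 : subcomplex (clos Z F1) (clos Z (F1 ++ F2)).
    move=> s [H|[sn us [f fF sf]]]; [by left | right; split=> //; exists f => //].
    by rewrite mem_cat fF.
  have M2 : subcomplex (clos Z F2) (clos Z (F1 ++ F2)).
    move=> s [H|[sn us [f fF sf]]]; [by left | right; split=> //; exists f => //].
    by rewrite mem_cat fF orbT.
  exact: ee_trans (equiv_mono M1 E1) (equiv_mono M2 E2).
Qed.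

Unset Implicit Arguments.
Theorem lemma3p3 (V : eqType) (X Z : complex V) :
  connected X -> subcomplex Z X -> connected Z -> essential Z ->
  pi1_not_injective Z X ->
  exists Z' : complex V,
    [/\ subcomplex Z' X, subcomplex Z Z', thick Z' & finitely_many_new Z' Z].
Proof.
move=> _ sZX cZ eZ [x [p [q [Lp Lq E NE]]]].
have [F [HF E0]] := init Z E.
pose ss := flatten [seq [seq mask m f | m <- allb 3] | f <- map undup F].
apply: (main_ind cZ eZ (n := (size ss).+1) (Y := clos Z F) (ss := ss) _ _ _ _ _ Lp Lq E0 NE).
- move=> s [H|[sn us [f fF sf]]]; first exact: sZX.
  have [Sf _] := HF f fF; apply: (simp_face Sf) => // z /sf; by rewrite mem_undup.
- by move=> s H; left.
- move=> s [H|[sn us [f fF sf]]]; first by case: eZ => D _ _; exact: D.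
  have [_ Sz] := HF f fF; rewrite -Sz; exact: uniq_leq_size.
- exact: leqnn.
- move=> s [//|[sn us [f fF sf]]] _.
  exists [seq z <- undup f | z \in s].
  + rewrite filter_mask; apply/flatten_mapP; exists (undup f); first exact: map_f.
    apply: (map_f (fun m => mask m (undup f))); apply: allbP; rewrite size_map.
    have [_ Sz] := HF f fF; by rewrite -Sz size_undup.
  + apply: uniq_perm => //; first by rewrite filter_uniq ?undup_uniq.
    move=> z; rewrite mem_filter mem_undup; case zs: (z \in s) => //=; by rewrite (sf _ zs).
Qed.
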